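(* Let $\mathbb{F}$ be a field of characteristic zero, let $\mathcal{A}=M_4(\mathbb{F})$ with the transpose involution, and let $\mathcal{L}$ be a Lie skew-ideal of $\mathcal{A}$. If $\mathcal{L}$ is closed under conjugation by elements of $O(4)=\{P\in M_4(\mathbb{F}): PP^t=I\}$, then $\mathcal{L}$ is one of \[ 0,\ \mathcal{Z},\ \mathcal{K},\ [\mathcal{S},\mathcal{K}],\ \mathcal{S},\ \mathcal{Z}+\mathcal{K},\ [\mathcal{A},\mathcal{A}],\ \mathcal{A}. \]
   Context: A Lie skew-ideal of an algebra with involution $\mathcal{A}$ is a subspace $\mathcal{L}$ such that $[x,a]=xa-ax\in\mathcal{L}$ for all $x\in\mathcal{L}$ and all skew-symmetric $a\in\mathcal{A}$. $\mathcal{S}$, $\mathcal{K}$, $\mathcal{Z}$ denote the symmetric, skew-symmetric (w.r.t. transpose) and scalar matrices in $M_4(\mathbb{F})$; for subsets $U,V$, $[U,V]$ is the linear span of $\{uv-vu:u\in U,v\in V\}$. *)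

(* Defs.v *)
From HB Require Import structures.
From mathcomp Require Import all_boot all_order all_algebra.
Set Implicit Arguments. Unset Strict Implicit. Unset Printing Implicit Defensive.
Import GRing.Theory.
Local Open Scope ring_scope.

Section Defs.
Variable F : fieldType.
Notation M4 := 'M[F]_4.

Definition lieb (x y : M4) : M4 := x *m y - y *m x.

Definition symmxP (x : M4) : Prop := x^T = x.
Definition skewmxP (x : M4) : Prop := x^T = - x.
Definition scalarmxP (x : M4) : Prop := exists c : F, x = c%:M.
Definition allmxP (x : M4) : Prop := True.

Definition comm_span (U V : M4 -> Prop) (x : M4) : Prop :=
  exists (n : nat) (c : 'I_n -> F) (u v : 'I_n -> M4),
    (forall i, U (u i)) /\ (forall i, V (v i)) /\
    x = \sum_(i < n) c i *: lieb (u i) (v i).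

Definition scal_plus_skewP (x : M4) : Prop :=
  exists z k, scalarmxP z /\ skewmxP k /\ x = z + k.

Definition lie_skew_ideal (L : {vspace M4}) : Prop :=
  forall x a : M4, x \in L -> skewmxP a -> lieb x a \in L.

Definition orthogonalP (P : M4) : Prop := P *m P^T = 1%:M.

Definition O4_conj_closed (L : {vspace M4}) : Prop :=
  forall P x : M4, orthogonalP P -> x \in L -> P *m x *m invmx P \in L.

Definition vs_is (L : {vspace M4}) (Q : M4 -> Prop) : Prop :=
  forall x : M4, x \in L <-> Q x.
End Defs.

(* Main.v *)
Require Import Defs.
From HB Require Import structures.
From mathcomp Require Import all_boot all_order all_algebra all_fingroup.
From Stdlib Require Import Classical.
From mathcomp Require Import ring.
Import GRing.Theory.
Local Open Scope ring_scope.
Set Implicit Arguments. Unset Strict Implicit. Unset Printing Implicit Defensive.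

Notation i0 := (@Ordinal 4 0 isT).
Notation i1 := (@Ordinal 4 1 isT).
Notation i2 := (@Ordinal 4 2 isT).
Notation i3 := (@Ordinal 4 3 isT).

Lemma ord4P (a : 'I_4) : a = i0 \/ a = i1 \/ a = i2 \/ a = i3.
Proof.
case: a => [[|[|[|[|n]]]] H]; last by [].
- by left; apply/val_inj.
- by right; left; apply/val_inj.
- by right; right; left; apply/val_inj.
- by right; right; right; apply/val_inj.
Qed.

Ltac ord4 a := case: (ord4P a) => [->|[->|[->|->]]].

Section Basics.
Variable F : fieldType.
Notation M4 := 'M[F]_4.

Lemma tr4 (y : M4) : \tr y = y i0 i0 + y i1 i1 + y i2 i2 + y i3 i3.
Proof.
rewrite /mxtrace !big_ord_recl big_ord0 addr0 !addrA.
by repeat f_equal; apply/val_inj.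
Qed.

Lemma mul4 (A B : M4) a b : (A *m B) a b =
  A a i0 * B i0 b + A a i1 * B i1 b + A a i2 * B i2 b + A a i3 * B i3 b.
Proof.
rewrite !mxE !big_ord_recl big_ord0 addr0 !addrA.
by repeat f_equal; apply/val_inj.
Qed.

Lemma subE (A B : M4) a b : (A - B) a b = A a b - B a b.
Proof. by rewrite !mxE. Qed.

Lemma invmx_orth (P : M4) : Defs.orthogonalP P -> invmx P = P^T.
Proof.
move=> H; have [Pu _] := mulmx1_unit H.
by rewrite -[invmx P]mulmx1 -H mulmxA mulVmx // mul1mx.
Qed.

Definition sg (k a : 'I_4) : F := if a == k then -1 else 1.

Lemma sg2 k a : sg k a * sg k a = 1.
Proof. by rewrite /sg; case: ifP => _; rewrite ?mulrNN mulr1. Qed.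

End Basics.


Section Conc.
Variable F : fieldType.
Notation M4 := 'M[F]_4.
Definition Em (p q : 'I_4) : M4 := delta_mx p q.
Definition Cm (e : F) p q : M4 := Em p q + e *: Em q p.
End Conc.
Arguments Em {F}.
Section Ent.
Variable F : fieldType.
Notation M4 := 'M[F]_4.
Lemma addE (A B : M4) a b : (A + B) a b = A a b + B a b. Proof. by rewrite !mxE. Qed.
Lemma oppE (A : M4) a b : (- A) a b = - A a b. Proof. by rewrite !mxE. Qed.
Lemma scaleE c (A : M4) a b : (c *: A) a b = c * A a b. Proof. by rewrite !mxE. Qed.
Lemma EmE p q a b : (Em p q : M4) a b = ((a == p) && (b == q))%:R. Proof. by rewrite !mxE. Qed.
Lemma scalarE (c : F) a b : (c%:M : M4) a b = c * (a == b)%:R. Proof. by rewrite !mxE mulr_natr. Qed.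
Lemma trE (A : M4) a b : A^T a b = A b a. Proof. by rewrite !mxE. Qed.
End Ent.

Section Gen.
Variable F : fieldType.
Hypothesis Fchar0 : [pchar F] =i pred0.
Notation M4 := 'M[F]_4.

Lemma natF_neq0 n : (n.+1)%:R != 0 :> F.
Proof. by have := (pcharf0P F).1 Fchar0 n.+1; move=> ->. Qed.

Definition closedP (P : M4 -> Prop) := P 0 /\ (forall x y, P x -> P y -> P (x + y)) /\
  (forall (c : F) x, P x -> P (c *: x)).

Lemma skew_gen (P : M4 -> Prop) x : closedP P -> (forall p q, p != q -> P (Cm (-1) p q)) ->
  x^T = - x -> P x.
Proof.
move=> [P0 [PD PZ]] HA Hx.
have Hs a b : x b a = - x a b by move/matrixP: Hx => /(_ a b); rewrite !mxE.
have Hd a : x a a = 0.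
  have := Hs a a; move/eqP; rewrite -subr_eq0 opprK -mulr2n -mulr_natr mulf_eq0.
  by rewrite (negbTE (natF_neq0 1)) orbF => /eqP.
have -> : x = x i0 i1 *: Cm (-1) i0 i1 + x i0 i2 *: Cm (-1) i0 i2 + x i0 i3 *: Cm (-1) i0 i3
   + x i1 i2 *: Cm (-1) i1 i2 + x i1 i3 *: Cm (-1) i1 i3 + x i2 i3 *: Cm (-1) i2 i3.
  apply/matrixP => a b; rewrite /Cm /Em !mxE.
  ord4 a; ord4 b; rewrite /= ?mulr1n ?mulr0n ?(Hs i0 i1) ?(Hs i0 i2) ?(Hs i0 i3)
    ?(Hs i1 i2) ?(Hs i1 i3) ?(Hs i2 i3) ?Hd; ring.
by repeat ((apply: (HA); done) || apply: (PD) || apply: (PZ)).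
Qed.

Lemma symtl_gen (P : M4 -> Prop) x : closedP P -> (forall p q, p != q -> P (Cm 1 p q)) ->
  (forall p, P (Em p p - Em i0 i0)) -> x^T = x -> \tr x = 0 -> P x.
Proof.
move=> [P0 [PD PZ]] HB HH Hx Ht.
have Hs a b : x b a = x a b by move/matrixP: Hx => /(_ a b); rewrite !mxE.
have H0 : x i0 i0 = - x i1 i1 - x i2 i2 - x i3 i3.
  have E : x i0 i0 = (x i0 i0 + x i1 i1 + x i2 i2 + x i3 i3) - x i1 i1 - x i2 i2 - x i3 i3 by ring.
  by rewrite {1}E -(tr4 x) Ht sub0r.
have -> : x = x i0 i1 *: Cm 1 i0 i1 + x i0 i2 *: Cm 1 i0 i2 + x i0 i3 *: Cm 1 i0 i3
   + x i1 i2 *: Cm 1 i1 i2 + x i1 i3 *: Cm 1 i1 i3 + x i2 i3 *: Cm 1 i2 i3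
   + x i1 i1 *: (Em i1 i1 - Em i0 i0) + x i2 i2 *: (Em i2 i2 - Em i0 i0)
   + x i3 i3 *: (Em i3 i3 - Em i0 i0).
  apply/matrixP => a b; rewrite /Cm /Em !mxE.
  ord4 a; ord4 b; rewrite /= ?mulr1n ?mulr0n ?(Hs i0 i1) ?(Hs i0 i2) ?(Hs i0 i3)
    ?(Hs i1 i2) ?(Hs i1 i3) ?(Hs i2 i3) ?H0; ring.
by repeat ((apply: (HB); done) || (apply: (HH); done) || apply: (PD) || apply: (PZ)).
Qed.

End Gen.

Section CS.
Variable F : fieldType.
Notation M4 := 'M[F]_4.

Lemma cs_closed (U V : M4 -> Prop) : closedP (comm_span U V).
Proof.
split; [|split].
- exists 0%N, (fun _ => 0), (fun _ => 0), (fun _ => 0).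
  by split; [case|split; [case|rewrite big_ord0]].
- move=> x y [n1 [c1 [u1 [v1 [Hu1 [Hv1 ->]]]]]] [n2 [c2 [u2 [v2 [Hu2 [Hv2 ->]]]]]].
  exists (n1 + n2)%N,
    (fun i => match split i with inl a => c1 a | inr b => c2 b end),
    (fun i => match split i with inl a => u1 a | inr b => u2 b end),
    (fun i => match split i with inl a => v1 a | inr b => v2 b end).
  split; first by move=> i; case: split.
  split; first by move=> i; case: split.
  have Hl i : split (lshift n2 i) = inl i := unsplitK (inl _ i).
  have Hr i : split (rshift n1 i) = inr i := unsplitK (inr _ i).
  rewrite big_split_ord /=; congr (_ + _); apply: eq_bigr => i _.
    by rewrite Hl.
  by rewrite Hr.
- move=> c x [n [c1 [u [v [Hu [Hv ->]]]]]].
  exists n, (fun i => c * c1 i), u, v; split => //; split => //.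
  rewrite scaler_sumr; apply: eq_bigr => i _; by rewrite scalerA.
Qed.

Lemma cs_br (U V : M4 -> Prop) u v : U u -> V v -> comm_span U V (lieb u v).
Proof.
move=> Hu Hv; exists 1%N, (fun _ => 1), (fun _ => u), (fun _ => v).
by split => //; split => //; rewrite big_ord1 scale1r.
Qed.

Lemma cs_mono (U V U' V' : M4 -> Prop) x : (forall u, U u -> U' u) -> (forall v, V v -> V' v) ->
  comm_span U V x -> comm_span U' V' x.
Proof.
move=> HU HV [n [c [u [v [Hu [Hv ->]]]]]]; exists n, c, u, v; split; last split => //.
  by move=> i; apply: HU.
by move=> i; apply: HV.
Qed.

Lemma cs_trace (U V : M4 -> Prop) x : comm_span U V x -> \tr x = 0.
Proof.
move=> [n [c [u [v [Hu [Hv ->]]]]]].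
rewrite raddf_sum big1 // => i _.
change (\tr (c i *: lieb (u i) (v i)) = 0).
have trB (A B : M4) : \tr (A - B) = \tr A - \tr B := raddfB _ _ _.
by rewrite mxtraceZ /lieb trB mxtrace_mulC subrr mulr0.
Qed.

Lemma cs_sym x : comm_span (@symmxP F) (@skewmxP F) x -> x^T = x.
Proof.
move=> [n [c [u [v [Hu [Hv ->]]]]]].
have trD (A B : M4) : (A + B)^T = A^T + B^T by apply/matrixP => a b; rewrite !mxE.
have trZ (e : F) (A : M4) : (e *: A)^T = e *: A^T by apply/matrixP => a b; rewrite !mxE.
have trB (A B : M4) : (A - B)^T = A^T - B^T by apply/matrixP => a b; rewrite !mxE.
rewrite (big_morph _ trD (trmx0 _ _ _)); apply: eq_bigr => i _.
rewrite trZ /lieb trB !trmx_mul Hu Hv mulNmx mulmxN opprK.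
by rewrite addrC.
Qed.

Lemma Em_sym p : symmxP (Em p p : M4).
Proof. by rewrite /symmxP /Em trmx_delta. Qed.

Lemma Cm_sym p q : symmxP (Cm 1 p q : M4).
Proof. by rewrite /symmxP /Cm /Em scale1r; apply/matrixP => a b; rewrite !mxE addrC [(b == p) && _]andbC [(b == q) && _]andbC. Qed.

Lemma skewC p q : skewmxP (Cm (-1) p q : M4).
Proof.
rewrite /skewmxP; apply/matrixP => a b; rewrite /Cm /Em !mxE.
rewrite [(b == p) && _]andbC [(b == q) && _]andbC; ring.
Qed.

Lemma br_EC (e : F) (p q : 'I_4) : p != q -> lieb (Em p p) (Cm e p q) = Cm (- e) p q.
Proof.
move=> pq; rewrite /lieb /Cm /Em mulmxDl mulmxDr -!scalemxAl -!scalemxAr !mul_delta_mx_cond.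
rewrite !eqxx (negbTE pq) eq_sym (negbTE pq) !mulr0n !mulr1n !scaler0 addr0 add0r.
by rewrite scaleNr.
Qed.

Lemma br_CC (p : 'I_4) : p != i0 ->
  lieb (Cm 1 i0 p) (Cm (-1) i0 p) = 2%:R *: (Em p p - Em i0 i0 : M4).
Proof.
move=> p0; rewrite /lieb /Cm /Em !mulmxDl !mulmxDr -!scalemxAl -!scalemxAr !mul_delta_mx_cond.
rewrite !eqxx (negbTE p0) eq_sym (negbTE p0) !mulr0n !mulr1n !scaler0 ?addr0 ?add0r !scale1r.
rewrite scaleN1r scalerBr.
by apply/matrixP => a b; rewrite !mxE; ring.
Qed.

End CS.

Section Dec.
Variable F : fieldType.
Hypothesis Fchar0 : [pchar F] =i pred0.
Notation M4 := 'M[F]_4.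

Definition sk (x : M4) : M4 := 2%:R^-1 *: (x - x^T).
Definition sy0 (x : M4) : M4 := 2%:R^-1 *: (x + x^T) - (\tr x / 4%:R)%:M.
Definition Tr (x : M4) := \tr x = 0.
Definition Sy (x : M4) := x^T = x.
Definition ZK (x : M4) := (forall i j, i != j -> x i j + x j i = 0) /\ (forall i j, x i i = x j j).

Let n2 := natF_neq0 Fchar0 1.
Let n4 := natF_neq0 Fchar0 3.

Lemma D1 x : x = (\tr x / 4%:R)%:M + sk x + sy0 x.
Proof.
apply/matrixP => a b; rewrite /sk /sy0 !mxE.
by field; rewrite ?n2 ?n4.
Qed.

Lemma D2 x : (sk x)^T = - sk x.
Proof. apply/matrixP => a b; rewrite /sk !mxE; ring. Qed.

Lemma D3 x : (sy0 x)^T = sy0 x /\ \tr (sy0 x) = 0.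
Proof.
split.
  by apply/matrixP => a b; rewrite /sy0 !mxE eq_sym; ring.
rewrite /sy0 !tr4 !mxE /=; rewrite ?mulr1n; by field; rewrite ?n2 ?n4.
Qed.

Lemma D4 x : Tr x -> (\tr x / 4%:R)%:M = 0 :> M4.
Proof. by rewrite /Tr => ->; rewrite mul0r; apply/matrixP => a b; rewrite !mxE mul0rn. Qed.

Lemma D5 x : Sy x -> sk x = 0.
Proof. by rewrite /Sy /sk => ->; rewrite subrr scaler0. Qed.

Lemma D6 x : ZK x -> sy0 x = 0.
Proof.
move=> [Ho Hd].
have Hs a b : a != b -> x b a = - x a b.
  by move=> ab; apply/eqP; rewrite -addr_eq0 addrC Ho.
apply/matrixP => a b; rewrite /sy0 tr4 !mxE.
ord4 a; ord4 b; rewrite /= ?mulr1n ?mulr0n ?(Hs i0 i1) ?(Hs i0 i2) ?(Hs i0 i3)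
    ?(Hs i1 i2) ?(Hs i1 i3) ?(Hs i2 i3) ?(Hd i1 i0) ?(Hd i2 i0) ?(Hd i3 i0) //; field; rewrite ?n2 ?n4.
all: done.
Qed.


Lemma skew_ent (x : M4) : x^T = - x -> (forall a b, x b a = - x a b) /\ (forall a, x a a = 0).
Proof.
move=> Hx.
have Hs a b : x b a = - x a b by move/matrixP: Hx => /(_ a b); rewrite !mxE.
split => // a.
have := Hs a a; move/eqP; rewrite -subr_eq0 opprK -mulr2n -mulr_natr mulf_eq0.
by rewrite (negbTE n2) orbF => /eqP.
Qed.

Lemma R1 (x : M4) : x = 0 <-> Tr x /\ Sy x /\ ZK x.
Proof.
split.
  move=> ->; split; first by rewrite /Tr tr4 !mxE !addr0.
  split; first exact: trmx0.
  by split => *; rewrite !mxE ?addr0.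
move=> [T [S Z]]; by rewrite (D1 x) D4 // D5 // D6 // !addr0.
Qed.

Lemma R2 (x : M4) : scalarmxP x <-> Sy x /\ ZK x.
Proof.
split.
  move=> [c ->]; split; first exact: tr_scalar_mx.
  split => i j.
    by move=> ij; rewrite !mxE (negbTE ij) eq_sym (negbTE ij) !mulr0n addr0.
  by rewrite !mxE !eqxx.
move=> [S Z]; exists (\tr x / 4%:R); by rewrite {1}(D1 x) D5 // D6 // !addr0.
Qed.

Lemma R3 (x : M4) : skewmxP x <-> Tr x /\ ZK x.
Proof.
split.
  move=> Hx; have [Hs Hd] := skew_ent Hx.
  split; first by rewrite /Tr tr4 !Hd !addr0.
  by split => i j; [move=> _; rewrite Hs addNr | rewrite !Hd].
move=> [T Z]; have E : x = sk x by rewrite {1}(D1 x) D4 // D6 // add0r addr0.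
rewrite /skewmxP E; exact: D2.
Qed.

Lemma R4 (x : M4) : comm_span (@symmxP F) (@skewmxP F) x <-> Tr x /\ Sy x.
Proof.
split; first by move=> H; split; [exact: cs_trace H | exact: cs_sym].
move=> [T S]; apply: (symtl_gen (cs_closed _ _)) S T.
  move=> p q pq; have := @br_EC F (-1) p q pq; rewrite opprK => <-.
  by apply: cs_br; [exact: Em_sym | exact: skewC].
move=> p; case: (eqVneq p i0) => [->|p0].
  by rewrite subrr; exact: (cs_closed _ _).1.
have -> : Em p p - Em i0 i0 = 2%:R^-1 *: lieb (Cm 1 i0 p) (Cm (-1) i0 p) :> M4.
  by rewrite br_CC // scalerA mulVf // scale1r.
apply: (cs_closed _ _).2.2; apply: cs_br; [exact: Cm_sym | exact: skewC].
Qed.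

Lemma R6 (x : M4) : scal_plus_skewP x <-> ZK x.
Proof.
split.
  move=> [z [k [[c ->] [Hk ->]]]]; have [Hs Hd] := skew_ent Hk.
  split => i j.
    by move=> ij; rewrite !mxE (negbTE ij) eq_sym (negbTE ij) !mulr0n Hs !add0r addNr.
  by rewrite !mxE !eqxx !Hd.
move=> Z; exists (\tr x / 4%:R)%:M, (sk x); split; first by exists (\tr x / 4%:R).
split; first exact: D2.
by rewrite {1}(D1 x) D6 // addr0.
Qed.

Lemma R7 (x : M4) : comm_span (@allmxP F) (@allmxP F) x <-> Tr x.
Proof.
split; first exact: cs_trace.
move=> T; rewrite (D1 x) D4 // add0r.
apply: (cs_closed _ _).2.1.
  apply: (skew_gen Fchar0 (cs_closed _ _)); last exact: D2.
  by move=> p q pq; rewrite -(@br_EC F 1 p q pq); apply: cs_br.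
apply: (cs_mono (U := @symmxP F) (V := @skewmxP F)) => //.
by apply/R4; have [? ?] := D3 x.
Qed.

End Dec.

Section Main.
Variable F : fieldType.
Hypothesis Fchar0 : [pchar F] =i pred0.
Notation M4 := 'M[F]_4.
Variable L : {vspace M4}.
Hypothesis HL : lie_skew_ideal L.
Hypothesis HO : O4_conj_closed L.

Let n2 := natF_neq0 Fchar0 1.

Lemma conjP (s : {perm 'I_4}) x : x \in L -> \matrix_(a, b) x (s a) (s b) \in L.
Proof.
move=> xL.
have orth : Defs.orthogonalP (perm_mx s : M4).
  by rewrite /Defs.orthogonalP tr_perm_mx -perm_mxM mulgV perm_mx1.
have := HO orth xL; rewrite invmx_orth // tr_perm_mx -row_permE -col_permE.
congr (_ \in L); apply/matrixP => a b; by rewrite !mxE.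
Qed.

Lemma conjS k x : x \in L -> \matrix_(a, b) (sg F k a * sg F k b * x a b) \in L.
Proof.
move=> xL.
set D : M4 := diag_mx (\row_a sg F k a).
have orth : Defs.orthogonalP D.
  rewrite /Defs.orthogonalP tr_diag_mx mul_diag_mx; apply/matrixP => a b; rewrite !mxE.
  case: eqVneq => [->|_]; by rewrite ?mulr0 ?mulr1n ?sg2.
have := HO orth xL; rewrite invmx_orth // tr_diag_mx mul_diag_mx mul_mx_diag.
congr (_ \in L); apply/matrixP => a b; rewrite !mxE; ring.
Qed.

Lemma perm2 (p q i j : 'I_4) : p != q -> i != j ->
  exists s : {perm 'I_4}, s p = i /\ s q = j.
Proof.
move=> pq ij.
set q' := tperm p i q.
have q'i : q' != i by rewrite /q' -{2}(tpermL p i) (inj_eq perm_inj) eq_sym.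
exists (tperm p i * tperm q' j)%g; rewrite !permM tpermL; split.
  by rewrite tpermD // eq_sym.
by rewrite -/q' tpermL.
Qed.

Lemma Cm_move e (i j p q : 'I_4) : i != j -> p != q -> Cm e i j \in L -> Cm e p q \in L.
Proof.
move=> ij pq H; have [s [sp sq]] := perm2 pq ij.
have := conjP s H; congr (_ \in L); apply/matrixP => a b.
by rewrite !mxE -sp -sq !(inj_eq perm_inj).
Qed.

Lemma memL_eq (y z : M4) : y \in L -> z = y -> z \in L.
Proof. by move=> ? ->. Qed.

Lemma move01 x (i j : 'I_4) : i != j -> x \in L ->
  exists2 y, y \in L & y i0 i1 = x i j /\ y i1 i0 = x j i /\ y i0 i0 = x i i /\ y i1 i1 = x j j.
Proof.
move=> ij xL; have [s [si sj]] := @perm2 i0 i1 i j isT ij.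
exists (\matrix_(a, b) x (s a) (s b)); first exact: conjP.
by rewrite !mxE si sj.
Qed.

Definition pairop (x : M4) : M4 :=
  let y1 := x - \matrix_(a, b) (sg F i0 a * sg F i0 b * x a b) in
  y1 - \matrix_(a, b) (sg F i1 a * sg F i1 b * y1 a b).

Lemma pairopL x : x \in L -> pairop x \in L.
Proof.
move=> xL; rewrite /pairop /=.
have y1L : x - \matrix_(a, b) (sg F i0 a * sg F i0 b * x a b) \in L.
  by apply: memvB => //; apply: conjS.
by apply: memvB => //; apply: conjS.
Qed.

Lemma pairopE x : pairop x = (4%:R * x i0 i1) *: Em i0 i1 + (4%:R * x i1 i0) *: Em i1 i0.
Proof.
rewrite /pairop /=; apply/matrixP => a b; rewrite /sg /Em !mxE.
ord4 a; ord4 b; rewrite /= ?mulr1n ?mulr0n; ring.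
Qed.

Lemma scaleL (c : F) (M : M4) : c != 0 -> c *: M \in L -> M \in L.
Proof. by move=> c0 H; rewrite -[M]scale1r -(mulVf c0) -scalerA; apply: memvZ. Qed.

Lemma K01 x : x \in L -> x i0 i1 != x i1 i0 -> Cm (-1) i0 i1 \in L.
Proof.
move=> xL H.
have yL := pairopL xL.
have wL := memvB yL (conjP (tperm i0 i1) yL).
apply: (@scaleL (4%:R * (x i0 i1 - x i1 i0))).
  by rewrite mulf_neq0 ?(natF_neq0 Fchar0) // subr_eq0.
apply: (memL_eq wL); rewrite pairopE; apply/matrixP => a b.
rewrite /Cm /Em !mxE !permE.
ord4 a; ord4 b; rewrite /= ?mulr1n ?mulr0n; ring.
Qed.

Lemma B01a x : x \in L -> x i0 i1 + x i1 i0 != 0 -> Cm 1 i0 i1 \in L.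
Proof.
move=> xL H.
have yL := pairopL xL.
have wL := memvD yL (conjP (tperm i0 i1) yL).
apply: (@scaleL (4%:R * (x i0 i1 + x i1 i0))).
  by rewrite mulf_neq0 ?(natF_neq0 Fchar0).
apply: (memL_eq wL); rewrite pairopE; apply/matrixP => a b.
rewrite /Cm /Em !mxE !permE.
ord4 a; ord4 b; rewrite /= ?mulr1n ?mulr0n; ring.
Qed.

Definition signp k (x : M4) : M4 := x + \matrix_(a, b) (sg F k a * sg F k b * x a b).

Lemma signpL k x : x \in L -> signp k x \in L.
Proof. by move=> xL; apply: memvD => //; apply: conjS. Qed.

Definition diagop x := signp i3 (signp i2 (signp i1 (signp i0 x))).

Lemma diagopL x : x \in L -> diagop x \in L.
Proof. by move=> xL; do 4! apply: signpL. Qed.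

Lemma diagopE x : diagop x = 16%:R *: (x i0 i0 *: Em i0 i0 + x i1 i1 *: Em i1 i1
   + x i2 i2 *: Em i2 i2 + x i3 i3 *: Em i3 i3).
Proof.
apply/matrixP => a b; rewrite /diagop /signp /sg /Em !mxE.
ord4 a; ord4 b; rewrite /= ?mulr1n ?mulr0n; ring.
Qed.

Lemma B01b x : x \in L -> x i0 i0 != x i1 i1 -> Cm 1 i0 i1 \in L.
Proof.
move=> xL H.
have wL := HL (diagopL xL) (@skewC F i0 i1).
apply: (@scaleL (16%:R * (x i0 i0 - x i1 i1))).
  by rewrite mulf_neq0 ?(natF_neq0 Fchar0) // subr_eq0.
apply: (memL_eq wL); rewrite diagopE /lieb; apply/matrixP => a b.
rewrite subE !mul4 /Cm /Em !mxE.
ord4 a; ord4 b; rewrite /= ?mulr1n ?mulr0n; ring.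
Qed.

Lemma Z1 x : x \in L -> \tr x != 0 -> 1%:M \in L.
Proof.
move=> xL H.
have yL := diagopL xL.
have eL := memvD yL (conjP (tperm i0 i1 * tperm i2 i3)%g yL).
have fL := memvD eL (conjP (tperm i0 i2 * tperm i1 i3)%g eL).
apply: (@scaleL (16%:R * \tr x)).
  by rewrite mulf_neq0 ?(natF_neq0 Fchar0).
apply: (memL_eq fL); rewrite diagopE tr4; apply/matrixP => a b.
rewrite /Em !mxE !permM !permE.
ord4 a; ord4 b; rewrite /= ?mulr1n ?mulr0n; ring.
Qed.

Lemma Hp (p : 'I_4) : (forall q r, q != r -> Cm 1 q r \in L) -> Em p p - Em i0 i0 \in L.
Proof.
move=> HB.
case: (eqVneq p i0) => [->|p0]; first by rewrite subrr mem0v.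
apply: (@scaleL 2%:R) => //.
rewrite -br_CC //; apply: HL (@skewC F _ _); apply: HB; by rewrite eq_sym.
Qed.


Definition zf := exists y, y \in L /\ ~ Tr y.
Definition kf := exists y, y \in L /\ ~ Sy y.
Definition sf := exists y, y \in L /\ ~ ZK y.

Lemma closedL : closedP (fun m : M4 => m \in L).
Proof. split; first exact: mem0v. split; [exact: memvD | exact: memvZ]. Qed.

Lemma allA : kf -> forall p q, p != q -> Cm (-1) p q \in L.
Proof.
move=> [y [yL Hy]].
have [i [j Hij]] : exists i j, y i j != y j i.
  apply: NNPP => H; apply: Hy; apply/matrixP => a b; rewrite mxE.
  case: (eqVneq (y b a) (y a b)) => // Hne; exfalso; apply: H; by exists b, a.
have ij : i != j by apply/eqP => E; move: Hij; rewrite E eqxx.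
have [y' y'L [E1 [E2 _]]] := move01 ij yL.
have A01 : Cm (-1) i0 i1 \in L by apply: (K01 y'L); rewrite E1 E2.
by move=> p q pq; apply: (Cm_move (i := i0) (j := i1)).
Qed.

Lemma allB : sf -> (forall p q, p != q -> Cm 1 p q \in L) /\ (forall p, Em p p - Em i0 i0 \in L).
Proof.
move=> [y [yL Hy]].
have B01 : Cm 1 i0 i1 \in L.
  case: (classic (exists i j, i != j /\ y i j + y j i != 0)) => [[i [j [ij H]]]|H1].
    have [y' y'L [E1 [E2 _]]] := move01 ij yL.
    by apply: (B01a y'L); rewrite E1 E2.
  case: (classic (exists i j, y i i != y j j)) => [[i [j H]]|H2].
    have ij : i != j by apply/eqP => E; move: H; rewrite E eqxx.
    have [y' y'L [_ [_ [E3 E4]]]] := move01 ij yL.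
    by apply: (B01b y'L); rewrite E3 E4.
  exfalso; apply: Hy; split => i j.
    move=> ij; case: (eqVneq (y i j + y j i) 0) => // ne; exfalso; apply: H1; by exists i, j.
  case: (eqVneq (y i i) (y j j)) => // ne; exfalso; apply: H2; by exists i, j.
have HB : forall p q, p != q -> Cm 1 p q \in L.
  by move=> p q pq; apply: (Cm_move (i := i0) (j := i1)).
by split => // p; apply: Hp.
Qed.

Lemma charL x : x \in L <-> (zf \/ Tr x) /\ (kf \/ Sy x) /\ (sf \/ ZK x).
Proof.
split.
  move=> xL; split; [|split].
  - by case: (classic (Tr x)) => H; [right | left; exists x].
  - by case: (classic (Sy x)) => H; [right | left; exists x].
  - by case: (classic (ZK x)) => H; [right | left; exists x].
move=> [[z|T] [[k|S] [s|Z]]]; rewrite (D1 Fchar0 x);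
  (apply: memvD; [apply: memvD|]).
all: try by rewrite D6 // mem0v.
all: try by rewrite D5 // mem0v.
all: try by rewrite D4 // mem0v.
all: try (apply: (symtl_gen closedL); [exact: (allB s).1 | exact: (allB s).2 | exact: (D3 Fchar0 x).1 | exact: (D3 Fchar0 x).2]).
all: try (apply: (skew_gen Fchar0 closedL); [exact: allA | exact: D2]).
all: try (case: z => [y [yL Hy]]; rewrite -scalemx1; apply: memvZ; apply: (Z1 yL); by apply/eqP).
Qed.

End Main.

Theorem mainTheorem4 (F : fieldType) (Fchar0 : [pchar F] =i pred0)
  (L : {vspace 'M[F]_4}) :
  lie_skew_ideal L -> O4_conj_closed L ->
  vs_is L (fun x => x = 0) \/ vs_is L (@scalarmxP F) \/ vs_is L (@skewmxP F) \/
  vs_is L (comm_span (@symmxP F) (@skewmxP F)) \/ vs_is L (@symmxP F) \/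
  vs_is L (@scal_plus_skewP F) \/ vs_is L (comm_span (@allmxP F) (@allmxP F)) \/
  vs_is L (@allmxP F).
Proof.
move=> HL HO.
have cL := charL Fchar0 HL HO.
case: (classic (zf L)) => z; case: (classic (kf L)) => k; case: (classic (sf L)) => s.
- do 7! right; move=> x; have := cL x; rewrite /allmxP; tauto.
- do 5! right; left; move=> x; have := cL x; have := R6 Fchar0 x; tauto.
- do 4! right; left; move=> x; have := cL x; have : symmxP x <-> Sy x by []; tauto.
- do 1! right; left; move=> x; have := cL x; have := R2 Fchar0 x; tauto.
- do 6! right; left; move=> x; have := cL x; have := R7 Fchar0 x; tauto.
- do 2! right; left; move=> x; have := cL x; have := R3 Fchar0 x; tauto.
- do 3! right; left; move=> x; have := cL x; have := R4 Fchar0 x; tauto.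
- left; move=> x; have := cL x; have := R1 Fchar0 x; tauto.
Qed.
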